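(* Let $Q$ be a groupoid quantale with base locale $A$ and let $X$ be a supported $Q$-module with support $\varsigma_X$. Then the following conditions are equivalent: (1) $\varsigma_X(q\cdot x)=\varsigma_Q(q\triangleleft\varsigma_X(x))$ for all $q\in Q$, $x\in X$; (2) $\varsigma_X(q\cdot x)\le\varsigma_Q(q)$ for all $q\in Q$, $x\in X$; (3) $\varsigma_X(q\cdot1_X)\le\varsigma_Q(q)$ for all $q\in Q$.
   Context: Let $A$ be a locale. An involutive $A$-$A$-quantale $Q$ is a sup-lattice with commuting unital left and right $A$-actions $a\triangleright q$, $q\triangleleft a$, an associative join-preserving multiplication with $(a\triangleright x)y=a\triangleright(xy)$, $(x\triangleleft a)y=x(a\triangleright y)$, $(xy)\triangleleft a=x(y\triangleleft a)$, and a join-preserving involution with $x^{**}=x$, $(xy)^*=y^*x^*$, $(a\triangleright x\triangleleft b)^*=b\triangleright x^*\triangleleft a$. A support is a sup-lattice homomorphism $\varsigma_Q:Q\to A$ with $\varsigma_Q(1_Q)=1_A$, $\varsigma_Q(x)\triangleright y\le xx^*y$, $\varsigma_Q(x)\triangleright x=x$; equivariant if $\varsigma_Q(a\triangleright x)=a\wedge\varsigma_Q(x)$. A groupoid quantale is such a $Q$ which is a frame with $(a\triangleright q)\wedge m=a\triangleright(q\wedge m)$, $m\wedge(q\triangleleft a)=(q\wedge m)\triangleleft a$, equipped with an equivariant support and a frame homomorphism $\upsilon:Q\to A$ with $\upsilon(a\triangleright1_Q)=a=\upsilon(1_Q\triangleleft a)$, such that the right adjoint of $Q\otimes_AQ\to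 Q$ preserves joins, $\bigvee_{xy\le a}\upsilon(x)\triangleright y=a$, and $\upsilon(a)\triangleright1_Q=\bigvee_{xx^*\le a}x$. A $Q$-module is a locale $X$ with a left $Q$-action $q\cdot x$ and unital left $A$-module structure $a\triangleright x$ satisfying $(a\triangleright q)\cdot x=a\triangleright(q\cdot x)$, $(q\triangleleft a)\cdot x=q\cdot(a\triangleright x)$, $a\triangleright(x\wedge y)=(a\triangleright x)\wedge y$. A pre-Hilbert $Q$-module has $\langle-,-\rangle:X\times X\to Q$ with $\langle q\cdot x,y\rangle=q\langle x,y\rangle$, $a\triangleright\langle x,1_X\rangle=\langle a\triangleright x,1_X\rangle$, $\langle\bigvee x_\alpha,y\rangle=\bigvee\langle x_\alpha,y\rangle$, $\langle x,y\rangle=\langle y,x\rangle^*$. A supported $Q$-module is a pre-Hilbert $Q$-module with a monotone $\varsigma_X:X\to A$ such that $\varsigma_X(1_X)=1_A$, $\varsigma_X(x)\triangleright1_X\le\langle x,x\rangle\cdot1_X$, and $\varsigma_X(x)\triangleright x=x$. *)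

(* Defs.v *)
From Stdlib Require Import Setoid.

Record SupLattice : Type := {
  sl_car :> Type;
  le : sl_car -> sl_car -> Prop;
  sup : (sl_car -> Prop) -> sl_car;
  le_refl : forall x, le x x;
  le_trans : forall x y z, le x y -> le y z -> le x z;
  le_antisym : forall x y, le x y -> le y x -> x = y;
  sup_ub : forall (S : sl_car -> Prop) x, S x -> le x (sup S);
  sup_least : forall (S : sl_car -> Prop) y,
      (forall x, S x -> le x y) -> le (sup S) y
}.
Arguments le {s} _ _.
Arguments sup {s} _.

Definition top {L : SupLattice} : L := sup (fun _ => True).

Definition image {T U : Type} (f : T -> U) (S : T -> Prop) : U -> Prop :=
  fun u => exists t, S t /\ u = f t.

Definition join_preserving {L M : SupLattice} (f : L -> M) : Prop :=
  forall S : L -> Prop, f (sup S) = sup (image f S).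

Definition monotone {L M : SupLattice} (f : L -> M) : Prop :=
  forall x y, le x y -> le (f x) (f y).

Record Frame : Type := {
  fr_sl :> SupLattice;
  meet : fr_sl -> fr_sl -> fr_sl;
  meet_glb : forall a b c, le c (meet a b) <-> (le c a /\ le c b);
  meet_sup_distr : forall a (S : fr_sl -> Prop),
      meet a (sup S) = sup (image (meet a) S)
}.
Arguments meet {f} _ _.

(* A locale is given by its frame of opens. *)
Definition Locale := Frame.

Definition frame_hom {L M : Frame} (f : L -> M) : Prop :=
  join_preserving f /\ (forall a b, f (meet a b) = meet (f a) (f b)) /\ f top = top.

(* Elements of Q (x)_A Q are the "balanced ideals" of
   Q x Q (Joyal--Tierney construction), ordered by inclusion; the join of a
   family of ideals is the least ideal containing their union. The right
   adjoint of  mu : Q (x)_A Q -> Q,  mu(S) = \/ { x y | (x,y) in S }, sends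
   q to the ideal { (x,y) | x y <= q }. ---------- *)
Definition balanced_ideal {A : Locale} {Q : SupLattice}
    (actl : A -> Q -> Q) (actr : Q -> A -> Q) (S : Q -> Q -> Prop) : Prop :=
  (forall x y x' y', S x y -> le x' x -> le y' y -> S x' y') /\
  (forall (X : Q -> Prop) y, (forall x, X x -> S x y) -> S (sup X) y) /\
  (forall x (Y : Q -> Prop), (forall y, Y y -> S x y) -> S x (sup Y)) /\
  (forall x a y, S (actr x a) y <-> S x (actl a y)).

Definition ideal_closure {A : Locale} {Q : SupLattice}
    (actl : A -> Q -> Q) (actr : Q -> A -> Q) (R : Q -> Q -> Prop) :
    Q -> Q -> Prop :=
  fun x y => forall S, balanced_ideal actl actr S ->
               (forall u v, R u v -> S u v) -> S x y.

Definition mul_radj {Q : SupLattice} (mul : Q -> Q -> Q) (q : Q) :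
    Q -> Q -> Prop :=
  fun x y => le (mul x y) q.

Definition mul_radj_join_preserving {A : Locale} {Q : SupLattice}
    (actl : A -> Q -> Q) (actr : Q -> A -> Q) (mul : Q -> Q -> Q) : Prop :=
  forall (F : Q -> Prop) x y,
    mul_radj mul (sup F) x y <->
    ideal_closure actl actr (fun u v => exists q, F q /\ mul_radj mul q u v) x y.

Record GroupoidQuantale (A : Locale) : Type := {
  gq_fr :> Frame;
  actl : A -> gq_fr -> gq_fr;
  actr : gq_fr -> A -> gq_fr;
  mul : gq_fr -> gq_fr -> gq_fr;
  inv : gq_fr -> gq_fr;
  qsupp : gq_fr -> A;
  ups : gq_fr -> A;
  actl_sup_l : forall (S : A -> Prop) q,
      actl (sup S) q = sup (image (fun a => actl a q) S);
  actl_sup_r : forall a (S : gq_fr -> Prop), actl a (sup S) = sup (image (actl a) S);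
  actl_assoc : forall a b q, actl (meet a b) q = actl a (actl b q);
  actl_unit : forall q, actl top q = q;
  actr_sup_l : forall (S : gq_fr -> Prop) a,
      actr (sup S) a = sup (image (fun q => actr q a) S);
  actr_sup_r : forall q (S : A -> Prop), actr q (sup S) = sup (image (actr q) S);
  actr_assoc : forall q a b, actr q (meet a b) = actr (actr q a) b;
  actr_unit : forall q, actr q top = q;
  act_comm : forall a q b, actr (actl a q) b = actl a (actr q b);
  mul_assoc : forall x y z, mul (mul x y) z = mul x (mul y z);
  mul_sup_l : forall (S : gq_fr -> Prop) y,
      mul (sup S) y = sup (image (fun x => mul x y) S);
  mul_sup_r : forall x (S : gq_fr -> Prop), mul x (sup S) = sup (image (mul x) S);
  mul_actl : forall a x y, mul (actl a x) y = actl a (mul x y);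
  mul_actm : forall x a y, mul (actr x a) y = mul x (actl a y);
  mul_actr : forall x y a, actr (mul x y) a = mul x (actr y a);
  inv_sup : join_preserving inv;
  inv_inv : forall x, inv (inv x) = x;
  inv_mul : forall x y, inv (mul x y) = mul (inv y) (inv x);
  inv_act : forall a x b, inv (actr (actl a x) b) = actr (actl b (inv x)) a;
  qsupp_sup : join_preserving qsupp;
  qsupp_top : qsupp top = top;
  qsupp_le : forall x y, le (actl (qsupp x) y) (mul (mul x (inv x)) y);
  qsupp_fix : forall x, actl (qsupp x) x = x;
  qsupp_equiv : forall a x, qsupp (actl a x) = meet a (qsupp x);
  meet_actl : forall a q m, meet (actl a q) m = actl a (meet q m);
  meet_actr : forall q a m, meet m (actr q a) = actr (meet q m) a;
  ups_hom : frame_hom ups;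
  ups_actl : forall a, ups (actl a top) = a;
  ups_actr : forall a, ups (actr top a) = a;
  radj_join : mul_radj_join_preserving actl actr mul;
  ups_cover : forall a : gq_fr,
      sup (fun z => exists x y, le (mul x y) a /\ z = actl (ups x) y) = a;
  ups_top : forall a : gq_fr,
      actl (ups a) top = sup (fun x => le (mul x (inv x)) a)
}.
Arguments actl {A g} _ _.
Arguments actr {A g} _ _.
Arguments mul {A g} _ _.
Arguments inv {A g} _.
Arguments qsupp {A g} _.
Arguments ups {A g} _.

Record SupportedModule (A : Locale) (Q : GroupoidQuantale A) : Type := {
  sm_fr :> Frame;
  qact : Q -> sm_fr -> sm_fr;
  aact : A -> sm_fr -> sm_fr;
  ip : sm_fr -> sm_fr -> Q;
  xsupp : sm_fr -> A;
  qact_sup_l : forall (S : Q -> Prop) x,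
      qact (sup S) x = sup (image (fun q => qact q x) S);
  qact_sup_r : forall q (S : sm_fr -> Prop), qact q (sup S) = sup (image (qact q) S);
  qact_assoc : forall q r x, qact (mul q r) x = qact q (qact r x);
  aact_sup_l : forall (S : A -> Prop) x,
      aact (sup S) x = sup (image (fun a => aact a x) S);
  aact_sup_r : forall a (S : sm_fr -> Prop), aact a (sup S) = sup (image (aact a) S);
  aact_assoc : forall a b x, aact (meet a b) x = aact a (aact b x);
  aact_unit : forall x, aact top x = x;
  qact_actl : forall a q x, qact (actl a q) x = aact a (qact q x);
  qact_actr : forall q a x, qact (actr q a) x = qact q (aact a x);
  aact_meet : forall a x y, aact a (meet x y) = meet (aact a x) y;
  ip_qact : forall q x y, ip (qact q x) y = mul q (ip x y);
  ip_aact : forall a x, actl a (ip x top) = ip (aact a x) top;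
  ip_sup : forall (S : sm_fr -> Prop) y, ip (sup S) y = sup (image (fun x => ip x y) S);
  ip_sym : forall x y, ip x y = inv (ip y x);
  xsupp_mono : monotone xsupp;
  xsupp_top : xsupp top = top;
  xsupp_le : forall x, le (aact (xsupp x) top) (qact (ip x x) top);
  xsupp_fix : forall x, aact (xsupp x) x = x
}.
Arguments qact {A Q s} _ _.
Arguments aact {A Q s} _ _.
Arguments ip {A Q s} _ _.
Arguments xsupp {A Q s} _.

(* Main.v *)
Require Import Defs.

Section H.
Lemma pair_sup (L : SupLattice) (x y : L) : le x y -> sup (fun z => z = x \/ z = y) = y.
Proof.
  intro h. apply le_antisym.
  - apply sup_least. intros z [->| ->]; auto using le_refl.
  - apply sup_ub. auto.
Qed.

Lemma jp_mono (L M : SupLattice) (f : L -> M) :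
  (forall S, f (sup S) = sup (image f S)) -> forall x y, le x y -> le (f x) (f y).
Proof.
  intros hf x y h. rewrite <- (pair_sup L x y h), hf.
  apply sup_ub. exists x. split; auto.
Qed.

Lemma le_top (L : SupLattice) (x : L) : le x top.
Proof. apply sup_ub. exact I. Qed.

Lemma meet_l (F : Frame) (a b : F) : le (meet a b) a.
Proof. apply (proj1 (meet_glb F a b (meet a b)) (le_refl _ _)). Qed.

Lemma meet_top (F : Frame) (a : F) : meet a top = a.
Proof. apply le_antisym. apply meet_l. apply meet_glb. split. apply le_refl. apply le_top. Qed.

Lemma meet_idem (F : Frame) (a : F) : meet a a = a.
Proof. apply le_antisym. apply meet_l. apply meet_glb. split; apply le_refl. Qed.
End H.

Theorem lemma4p5 (A : Locale) (Q : GroupoidQuantale A)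
    (X : SupportedModule A Q) :
  ((forall (q : Q) (x : X), xsupp (qact q x) = qsupp (actr q (xsupp x))) <->
   (forall (q : Q) (x : X), le (xsupp (qact q x)) (qsupp q))) /\
  ((forall (q : Q) (x : X), le (xsupp (qact q x)) (qsupp q)) <->
   (forall q : Q, le (xsupp (qact q (@top X))) (qsupp q))).
Proof.
  assert (qsm : forall u v : Q, le u v -> le (qsupp u) (qsupp v)).
  { apply jp_mono. apply qsupp_sup. }
  assert (actrm : forall (q : Q) (a b : A), le a b -> le (actr q a) (actr q b)).
  { intro q. apply jp_mono. apply actr_sup_r. }
  assert (actr_le : forall (q : Q) a, le (actr q a) q).
  { intros q a. rewrite <- (actr_unit _ _ q) at 2. apply actrm, le_top. }
  assert (qactm : forall (q : Q) (x y : X), le x y -> le (qact q x) (qact q y)).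
  { intro q. apply jp_mono. apply qact_sup_r. }
  assert (qactml : forall (x : X) (q r : Q), le q r -> le (qact q x) (qact r x)).
  { intro x. apply (jp_mono Q X (fun q => qact q x)). intro S. apply qact_sup_l. }
  assert (xsm := xsupp_mono A Q X).
  assert (mulml : forall (y q r : Q), le q r -> le (mul q y) (mul r y)).
  { intro y. apply (jp_mono Q Q (fun q => mul q y)). intro S. apply mul_sup_l. }
  assert (mulmr : forall (y q r : Q), le q r -> le (mul y q) (mul y r)).
  { intro y. apply jp_mono. apply mul_sup_r. }
  assert (ipm1 : forall (z x y : X), le x y -> le (ip x z) (ip y z)).
  { intro z. apply (jp_mono X Q (fun x => ip x z)). intro S. apply ip_sup. }
  assert (invm : forall u v : Q, le u v -> le (inv u) (inv v)).
  { apply jp_mono. apply inv_sup. }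
  assert (ipm2 : forall (z x y : X), le x y -> le (ip z x) (ip z y)).
  { intros z x y h. rewrite (ip_sym _ _ _ z x), (ip_sym _ _ _ z y). apply invm, ipm1, h. }
  assert (qs_mul : forall x y : Q, le (qsupp (mul x y)) (qsupp x)).
  { intros x y. rewrite <- (qsupp_fix _ _ x) at 1. rewrite mul_actl, qsupp_equiv. apply meet_l. }
  assert (T2_3 : (forall (q : Q) (x : X), le (xsupp (qact q x)) (qsupp q)) <->
   (forall q : Q, le (xsupp (qact q (@top X))) (qsupp q))).
  { split; intros h q; [ apply h |]. intro x. eapply le_trans; [| apply (h q)].
    apply xsm, qactm, le_top. }
  split; [| exact T2_3].
  split.
  - intros h q x. rewrite h. apply qsm, actr_le.
  - intros h q x.
    set (a := xsupp x). set (r := actr q a).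
    assert (hy : qact q x = qact r x).
    { unfold r. rewrite qact_actr. unfold a. rewrite xsupp_fix. reflexivity. }
    rewrite hy. apply le_antisym; [ apply h |].
    set (P := ip (@top X) (@top X)).
    assert (hP : qsupp P = top).
    { apply le_antisym; [apply le_top|].
      rewrite <- (xsupp_top _ _ X). eapply le_trans; [| apply (h P (@top X))].
      apply xsm. pose proof (xsupp_le _ _ X (@top X)) as e.
      rewrite xsupp_top, aact_unit in e. exact e. }
    set (s := qsupp r).
    assert (e1 : s = qsupp (actl s P)).
    { rewrite qsupp_equiv, hP, meet_top. reflexivity. }
    rewrite e1. eapply le_trans. { apply qsm. apply qsupp_le. }
    rewrite mul_assoc.
    eapply le_trans. { apply qsm. apply mulmr.
      unfold P. rewrite <- ip_qact. apply ipm1. apply le_top. }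
    assert (er : r = actr r a).
    { unfold r. rewrite <- actr_assoc, meet_idem. reflexivity. }
    rewrite er at 1. rewrite mul_actm. unfold P. rewrite ip_aact.
    eapply le_trans. { apply qsm. apply mulmr. apply ipm1. apply xsupp_le. }
    rewrite ip_qact.
    eapply le_trans. { apply qsm. apply mulmr. apply mulml. apply ipm2. apply (le_top _ x). }
    rewrite <- mul_assoc.
    eapply le_trans. { apply qs_mul. }
    rewrite <- ip_qact.
    set (y := qact r x). set (c := xsupp y).
    rewrite <- (xsupp_fix _ _ X y) at 1. fold c.
    rewrite <- ip_aact, qsupp_equiv. apply meet_l.
Qed.
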